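(* Let $f(x,y)=\frac12x^\top Px-b^\top x+x^\top Ay-\frac12y^\top Qy+c^\top y$ on $\mathbb{R}^n\times\mathbb{R}^m$ with $P\succeq0$, $Q\succeq0$, and suppose a stationary point of $f$ exists. For $\nu>0$ let $z^*(\nu)$ be the saddle point of $\min_x\max_y f_\nu(x,y)$, where $f_\nu(x,y)=f(x,y)+\frac{\nu}{2}\|x\|^2-\frac{\nu}{2}\|y\|^2$. Then there exist constants $C,\delta_0>0$ such that $\|z^*(\nu_1)-z^*(\nu_2)\|\le C|\nu_1-\nu_2|$ for all $0<\nu_1,\nu_2<\delta_0$ (i.e., the error bound condition holds with exponent $\theta=1$).
   Context: The error bound condition with exponent $\theta\in(0,1]$ means: there exist $C,\delta_0>0$ such that $\|z^*(\nu_1)-z^*(\nu_2)\|\le C|\nu_1-\nu_2|^\theta$ for all $0<\nu_1,\nu_2<\delta_0$. *)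

(* Defs.v *)
From HB Require Import structures.
From mathcomp Require Import all_boot all_order all_algebra.
From mathcomp Require Import reals.
Set Implicit Arguments. Unset Strict Implicit. Unset Printing Implicit Defensive.
Import Order.TTheory GRing.Theory Num.Theory.
Local Open Scope ring_scope.

Definition dotv (R : realType) (k : nat) (u v : 'cV[R]_k) : R := (u^T *m v) 0 0.
Definition sqnorm (R : realType) (k : nat) (u : 'cV[R]_k) : R := dotv u u.

Definition pairnorm (R : realType) (n m : nat) (x : 'cV[R]_n) (y : 'cV[R]_m) : R :=
  Num.sqrt (sqnorm x + sqnorm y).

Definition psd (R : realType) (k : nat) (P : 'M[R]_k) : Prop :=
  P^T = P /\ forall x : 'cV[R]_k, 0 <= dotv x (P *m x).

Definition fQ (R : realType) (n m : nat) (P : 'M[R]_n) (Q : 'M[R]_m)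
  (A : 'M[R]_(n, m)) (b : 'cV[R]_n) (c : 'cV[R]_m)
  (x : 'cV[R]_n) (y : 'cV[R]_m) : R :=
  2^-1 * dotv x (P *m x) - dotv b x + dotv x (A *m y)
  - 2^-1 * dotv y (Q *m y) + dotv c y.

Definition fnu (R : realType) (n m : nat) (P : 'M[R]_n) (Q : 'M[R]_m)
  (A : 'M[R]_(n, m)) (b : 'cV[R]_n) (c : 'cV[R]_m) (nu : R)
  (x : 'cV[R]_n) (y : 'cV[R]_m) : R :=
  fQ P Q A b c x y + nu / 2 * sqnorm x - nu / 2 * sqnorm y.

(* Gradients of f (P, Q symmetric) *)
Definition grad_x (R : realType) (n m : nat) (P : 'M[R]_n)
  (A : 'M[R]_(n, m)) (b : 'cV[R]_n) (x : 'cV[R]_n) (y : 'cV[R]_m) : 'cV[R]_n :=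
  P *m x - b + A *m y.
Definition grad_y (R : realType) (n m : nat) (Q : 'M[R]_m)
  (A : 'M[R]_(n, m)) (c : 'cV[R]_m) (x : 'cV[R]_n) (y : 'cV[R]_m) : 'cV[R]_m :=
  A^T *m x - Q *m y + c.

Definition saddle_point (R : realType) (n m : nat)
  (g : 'cV[R]_n -> 'cV[R]_m -> R) (xs : 'cV[R]_n) (ys : 'cV[R]_m) : Prop :=
  forall (x : 'cV[R]_n) (y : 'cV[R]_m), g xs y <= g xs ys /\ g xs ys <= g x ys.

(* Main.v *)
Require Import Defs.
From HB Require Import structures.
From mathcomp Require Import all_boot all_order all_algebra.
From mathcomp Require Import reals.
From mathcomp Require Import ring lra.
Set Implicit Arguments. Unset Strict Implicit. Unset Printing Implicit Defensive.
Import Order.TTheory GRing.Theory Num.Theory.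
Local Open Scope ring_scope.

Section Dot.
Variable R : realType.
Implicit Types k : nat.

Lemma dotvE k (u v : 'cV[R]_k) : dotv u v = \sum_i u i 0 * v i 0.
Proof. by rewrite /dotv mxE; apply: eq_bigr => i _; rewrite mxE. Qed.

Lemma dotvC k (u v : 'cV[R]_k) : dotv u v = dotv v u.
Proof. rewrite !dotvE; apply: eq_bigr => i _; exact: mulrC. Qed.

Lemma dotvDl k (u v w : 'cV[R]_k) : dotv (u + v) w = dotv u w + dotv v w.
Proof. by rewrite !dotvE -big_split; apply: eq_bigr => i _; rewrite mxE mulrDl. Qed.

Lemma dotvDr k (u v w : 'cV[R]_k) : dotv w (u + v) = dotv w u + dotv w v.
Proof. by rewrite dotvC dotvDl !(dotvC w). Qed.

Lemma dotvZl k a (u w : 'cV[R]_k) : dotv (a *: u) w = a * dotv u w.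
Proof. by rewrite !dotvE mulr_sumr; apply: eq_bigr => i _; rewrite mxE mulrA. Qed.

Lemma dotvZr k a (u w : 'cV[R]_k) : dotv w (a *: u) = a * dotv w u.
Proof. by rewrite dotvC dotvZl dotvC. Qed.

Lemma dotvNl k (u w : 'cV[R]_k) : dotv (- u) w = - dotv u w.
Proof. by rewrite -scaleN1r dotvZl mulN1r. Qed.

Lemma dotvNr k (u w : 'cV[R]_k) : dotv w (- u) = - dotv w u.
Proof. by rewrite dotvC dotvNl dotvC. Qed.

Lemma dotvBl k (u v w : 'cV[R]_k) : dotv (u - v) w = dotv u w - dotv v w.
Proof. by rewrite dotvDl dotvNl. Qed.

Lemma dotvBr k (u v w : 'cV[R]_k) : dotv w (u - v) = dotv w u - dotv w v.
Proof. by rewrite dotvDr dotvNr. Qed.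

Lemma dotv0r k (w : 'cV[R]_k) : dotv w 0 = 0.
Proof. by rewrite dotvE big1 // => i _; rewrite mxE mulr0. Qed.

Lemma dotv0l k (w : 'cV[R]_k) : dotv 0 w = 0.
Proof. by rewrite dotvC dotv0r. Qed.

Lemma dotv_mul k l (B : 'M[R]_(k, l)) u v : dotv u (B *m v) = dotv (B^T *m u) v.
Proof. by rewrite /dotv trmx_mul trmxK mulmxA. Qed.

Lemma sqnorm_ge0 k (u : 'cV[R]_k) : 0 <= sqnorm u.
Proof. rewrite /sqnorm dotvE; apply: sumr_ge0 => i _; by rewrite -expr2 sqr_ge0. Qed.

Lemma sqnorm_eq0 k (u : 'cV[R]_k) : sqnorm u = 0 -> u = 0.
Proof.
rewrite /sqnorm dotvE => /eqP; rewrite psumr_eq0; last by move=> i _; by rewrite -expr2 sqr_ge0.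
move=> /allP H; apply/matrixP => i j; rewrite (ord1 j) mxE.
have := H i (mem_index_enum _); rewrite /= mulf_eq0 orbb => /eqP //.
Qed.

Lemma quad_zero (a b : R) : 0 <= b -> (forall t, 0 <= t * a + t ^+ 2 * b) -> a = 0.
Proof.
move=> hb H; have := H (- a / (1 + b)).
have hp : 0 < 1 + b by lra.
set s := (1 + b)^-1.
have hs : s * (1 + b) = 1 by rewrite mulVf // gt_eqF.
have hs0 : 0 < s by rewrite invr_gt0.
have -> : - a / (1 + b) * a + (- a / (1 + b)) ^+ 2 * b = - (a ^+ 2 * s ^+ 2).
  have -> : b = s^-1 - 1 by rewrite invrK; lra.
  by rewrite /s; field; rewrite gt_eqF.
move=> h; apply/eqP; rewrite -sqrf_eq0 eq_le sqr_ge0 andbT.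
have : a ^+ 2 * s ^+ 2 <= 0 by lra.
by rewrite pmulr_lle0 // exprn_gt0.
Qed.


Lemma CS l (a b : 'I_l -> R) :
  (\sum_j a j * b j) ^+ 2 <= (\sum_j a j ^+ 2) * (\sum_j b j ^+ 2).
Proof.
set A := \sum_j a j ^+ 2; set B := \sum_j b j ^+ 2; set C := \sum_j a j * b j.
have hA : 0 <= A by apply: sumr_ge0 => j _; rewrite sqr_ge0.
have hB : 0 <= B by apply: sumr_ge0 => j _; rewrite sqr_ge0.
have key : forall t, 0 <= t ^+ 2 * A + 2 * t * C + B.
  move=> t; have -> : t ^+ 2 * A + 2 * t * C + B = \sum_j (t * a j + b j) ^+ 2.
    rewrite /A /B /C mulr_sumr mulr_sumr -!big_split /=.
    by apply: eq_bigr => j _; ring.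
  by apply: sumr_ge0 => j _; rewrite sqr_ge0.
have [A0|Apos] := eqVneq A 0.
  have ha : forall j, a j = 0.
    move=> j; move/eqP: A0; rewrite psumr_eq0; last by move=> i _; rewrite sqr_ge0.
    by move=> /allP /(_ j (mem_index_enum _)) /=; rewrite sqrf_eq0 => /eqP.
  have -> : C = 0 by rewrite /C big1 // => j _; rewrite ha mul0r.
  by rewrite A0 expr0n /= mul0r.
have Ap : 0 < A by rewrite lt_def Apos hA.
have := key (- C / A).
have -> : (- C / A) ^+ 2 * A + 2 * (- C / A) * C + B = B - C ^+ 2 / A.
  by field.
rewrite subr_ge0 ler_pdivrMr // => h; by rewrite mulrC.
Qed.

Lemma sqnorm_mul_le k l (B : 'M[R]_(k, l)) v :
  sqnorm (B *m v) <= (\sum_i \sum_j B i j ^+ 2) * sqnorm v.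
Proof.
rewrite /sqnorm !dotvE mulr_suml; apply: ler_sum => i _.
rewrite mxE -expr2.
have -> : \sum_j v j 0 * v j 0 = \sum_j v j 0 ^+ 2 by apply: eq_bigr => j _; rewrite expr2.
exact: CS.
Qed.


Lemma mono_ker k (M : 'M[R]_k) (p v : 'cV[R]_k) :
  (forall w, 0 <= dotv w (M *m w)) -> M *m p = 0 -> p = M *m v -> p = 0.
Proof.
move=> hM hp pv.
have H : forall y, dotv p (M *m y) = 0.
  move=> y; apply: (quad_zero (b := dotv y (M *m y))); first exact: hM.
  move=> t; have := hM (p + t *: y).
  rewrite mulmxDr -scalemxAr hp add0r dotvDl !dotvZr dotvZl.
  by rewrite expr2 mulrA.
apply: sqnorm_eq0; rewrite /sqnorm {2}pv; exact: H.
Qed.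

Lemma mono_bound k (M : 'M[R]_k) :
  (forall w, 0 <= dotv w (M *m w)) ->
  exists K, 0 <= K /\ forall u, sqnorm (M *m u) <= K * sqnorm (M *m (M *m u)).
Proof.
move=> hM.
pose T := M^T.
pose X := pinvmx (T *m T) *m T.
exists (\sum_i \sum_j X^T i j ^+ 2); split.
  by apply: sumr_ge0 => i _; apply: sumr_ge0 => j _; rewrite sqr_ge0.
move=> u.
have [w ew] : {w | w = M *m u} by eexists.
have [y ey] : {y | y = (M *m w)^T} by eexists.
rewrite -ew.
have yT : y = u^T *m (T *m T) by rewrite ey ew /T !trmx_mul mulmxA.
have [s es] : {s | s = y *m pinvmx (T *m T)} by eexists.
have hs : s *m (T *m T) = y by rewrite es mulmxKpV // yT submxMl.
have e : (s *m T)^T - w = 0.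
  apply: (@mono_ker _ M _ (s^T - u)) => //.
    rewrite mulmxBr (_ : M *m (s *m T)^T = (s *m (T *m T))^T); last first.
      by rewrite !trmx_mul /T trmxK mulmxA.
    by rewrite hs ey trmxK subrr.
  by rewrite mulmxBr ew /T trmx_mul trmxK.
have ew2 : w = X^T *m (M *m w).
  apply/eqP; rewrite eq_sym -subr_eq0; apply/eqP; rewrite -[X in _ = X]e; congr (_ - _).
  by rewrite es -mulmxA -/X [(y *m X)^T]trmx_mul ey trmxK.
rewrite {1}ew2; exact: sqnorm_mul_le.
Qed.


Lemma lip_core k (M : 'M[R]_k) (q z0 z1 z2 : 'cV[R]_k) (nu1 nu2 K : R) :
  (forall w, 0 <= dotv w (M *m w)) -> 0 <= K ->
  (forall u, sqnorm (M *m u) <= K * sqnorm (M *m (M *m u))) ->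
  M *m z0 = q -> M *m z1 + nu1 *: z1 = q -> M *m z2 + nu2 *: z2 = q ->
  0 < nu1 -> 0 < nu2 ->
  sqnorm (z1 - z2) <= K * sqnorm z0 * (nu1 - nu2) ^+ 2.
Proof.
move=> hM hK hB h0 h1 h2 p1 p2.
have e1 : M *m z1 = q - nu1 *: z1 by rewrite -h1 addrK.
have e2 : M *m z2 = q - nu2 *: z2 by rewrite -h2 addrK.
have hz2 : sqnorm z2 <= sqnorm z0.
  have := hM (z2 - z0); rewrite mulmxBr e2 h0 addrAC subrr add0r.
  rewrite dotvNr dotvZr dotvBl => hm.
  have := sqnorm_ge0 (z2 - z0); rewrite /sqnorm !dotvBl !dotvBr (dotvC z2 z0) => hs.
  rewrite /sqnorm; nra.
have hd : z1 - z2 = M *m (nu1^-1 *: (z0 - z1) - nu2^-1 *: (z0 - z2)).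
  rewrite mulmxBr -!scalemxAr !mulmxBr h0 e1 e2 !subKr.
  by rewrite !scalerA !mulVf ?gt_eqF // !scale1r.
have hMd : M *m (z1 - z2) = nu2 *: z2 - nu1 *: z1.
  by rewrite mulmxBr e1 e2 opprB addrA addrAC [q - _]addrC addrK addrC.
have hmono := hM (z1 - z2); rewrite hMd in hmono.
have hb := hB (nu1^-1 *: (z0 - z1) - nu2^-1 *: (z0 - z2)).
rewrite -hd hMd in hb.
move: hmono hb; rewrite /sqnorm !(dotvBl, dotvBr, dotvZl, dotvZr).
rewrite (dotvC z2 z1).
have hs1 := sqnorm_ge0 z1; have hs2 := sqnorm_ge0 (z1 - z2).
move: hs2 hz2; rewrite /sqnorm !dotvBl !dotvBr (dotvC z2 z1).
set a11 := dotv z1 z1; set a12 := dotv z1 z2; set a22 := dotv z2 z2; set b := dotv z0 z0.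
move=> hD hz hmono hb.
set D := a11 - a12 - (a12 - a22) in hD hb *.
have hMd2 : nu2 * (nu2 * a22 - nu1 * a12) - nu1 * (nu2 * a12 - nu1 * a11)
   <= (nu1 - nu2) ^+ 2 * a22.
  have h1' := mulr_ge0 (ltW p1) hmono.
  have h2' := mulr_ge0 (mulr_ge0 (ltW p1) (ltW p1)) hD.
  rewrite /D in h2'; nra.
apply: (le_trans hb).
rewrite -mulrA ler_wpM2l //.
apply: (le_trans hMd2).
by rewrite mulrC ler_wpM2r // sqr_ge0.
Qed.


Lemma dotv_sym k (P : 'M[R]_k) u v : P^T = P -> dotv u (P *m v) = dotv v (P *m u).
Proof. by move=> hP; rewrite dotv_mul hP dotvC. Qed.

Lemma dotv_psd k (P : 'M[R]_k) u : psd P -> 0 <= dotv u (P *m u).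
Proof. by case=> _ ->. Qed.

Lemma saddle_stat n m (P : 'M[R]_n) (Q : 'M[R]_m) (A : 'M[R]_(n, m)) b c nu xs ys :
  psd P -> psd Q -> 0 < nu -> saddle_point (fnu P Q A b c nu) xs ys ->
  P *m xs - b + A *m ys + nu *: xs = 0 /\ A^T *m xs - Q *m ys + c - nu *: ys = 0.
Proof.
move=> hP hQ hnu hS; split.
  set G := P *m xs - b + A *m ys + nu *: xs.
  have hG : forall d, dotv G d = 0.
    move=> d; apply: (quad_zero (b := 2^-1 * dotv d (P *m d) + nu / 2 * dotv d d)).
      have := dotv_psd d hP; have := sqnorm_ge0 d; rewrite /sqnorm => h1 h2.
      apply: addr_ge0; apply: mulr_ge0 => //; rewrite ?invr_ge0 ?divr_ge0 //; lra.
    move=> t; have [_ H] := hS (xs + t *: d) ys.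
    move: H; rewrite /fnu /fQ /sqnorm /G mulmxDr -!scalemxAr.
    rewrite !(dotvDl, dotvDr, dotvZl, dotvZr, dotvBl, dotvBr).
    rewrite (dotvC (P *m xs) d) (dotvC (A *m ys) d) (dotvC xs d) (dotv_sym xs d hP.1).
    rewrite dotvNl expr2 -subr_ge0 => h; apply: (le_trans h).
    rewrite le_eqVlt; apply/orP; left; apply/eqP; by field.
  exact: (sqnorm_eq0 (hG G)).
set H := A^T *m xs - Q *m ys + c - nu *: ys.
have hH : forall e, dotv H e = 0.
  move=> e; apply: oppr_inj; rewrite oppr0.
  apply: (quad_zero (b := 2^-1 * dotv e (Q *m e) + nu / 2 * dotv e e)).
    have := dotv_psd e hQ; have := sqnorm_ge0 e; rewrite /sqnorm => h1 h2.
    apply: addr_ge0; apply: mulr_ge0 => //; rewrite ?invr_ge0 ?divr_ge0 //; lra.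
  move=> t; have [H0 _] := hS xs (ys + t *: e).
  move: H0; rewrite /fnu /fQ /sqnorm /H !mulmxDr -!scalemxAr.
  rewrite !(dotvDl, dotvDr, dotvZl, dotvZr, dotvBl, dotvBr, dotvNl).
  rewrite (dotvC (Q *m ys) e) (dotvC ys e) (dotv_sym ys e hQ.1) (dotv_mul A xs e).
  rewrite expr2 -subr_ge0 => h; apply: (le_trans h).
  by rewrite le_eqVlt; apply/orP; left; apply/eqP; field.
exact: (sqnorm_eq0 (hH H)).
Qed.


Lemma dotv_col n m (x u : 'cV[R]_n) (y v : 'cV[R]_m) :
  dotv (col_mx x y) (col_mx u v) = dotv x u + dotv y v.
Proof. by rewrite /dotv tr_col_mx mul_row_col mxE. Qed.

Lemma r1 (V : zmodType) (X b Y Z : V) : X - b + Y + Z = 0 -> X + Y + Z = b.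
Proof.
move=> h; apply/eqP; rewrite -subr_eq0 -h; apply/eqP.
by rewrite [X - b + Y]addrAC [RHS]addrAC.
Qed.

Lemma r2 (V : zmodType) (X Y c Z : V) : X - Y + c - Z = 0 -> - X + Y + Z = c.
Proof.
move=> h; apply/eqP; rewrite -subr_eq0 -oppr_eq0 -h; apply/eqP.
by rewrite !opprD !opprK addrAC.
Qed.

End Dot.

Theorem proposition5p3 (R : realType) (n m : nat) (P : 'M[R]_n) (Q : 'M[R]_m)
  (A : 'M[R]_(n, m)) (b : 'cV[R]_n) (c : 'cV[R]_m) :
  psd P -> psd Q ->
  (exists (x0 : 'cV[R]_n) (y0 : 'cV[R]_m),
      grad_x P A b x0 y0 = 0 /\ grad_y Q A c x0 y0 = 0) ->
  exists C delta0 : R, 0 < C /\ 0 < delta0 /\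
    forall (nu1 nu2 : R) (x1 x2 : 'cV[R]_n) (y1 y2 : 'cV[R]_m),
      0 < nu1 < delta0 -> 0 < nu2 < delta0 ->
      saddle_point (fnu P Q A b c nu1) x1 y1 ->
      saddle_point (fnu P Q A b c nu2) x2 y2 ->
      pairnorm (x1 - x2) (y1 - y2) <= C * `|nu1 - nu2|.
Proof.
move=> hP hQ [x0 [y0 [g1 g2]]].
pose M := block_mx P A (- A^T) Q.
have hM : forall w, 0 <= dotv w (M *m w).
  move=> w; rewrite -[w]vsubmxK /M mul_block_col dotv_col.
  set x := usubmx w; set y := dsubmx w.
  rewrite !dotvDr mulNmx dotvNr (dotv_mul A x y).
  rewrite (dotvC y (A^T *m x)) addrA addrK.
  by apply: addr_ge0; apply: dotv_psd.
have [K [hK hB]] := mono_bound hM.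
pose z0 := col_mx x0 y0.
have h0 : M *m z0 = col_mx b c.
  rewrite /M /z0 mul_block_col mulNmx; congr col_mx.
    by apply/eqP; rewrite -subr_eq0 addrAC; apply/eqP; exact: g1.
  apply/eqP; rewrite -subr_eq0 -oppr_eq0 !opprD !opprK; apply/eqP; exact: g2.
have stat : forall nu xs ys, 0 < nu -> saddle_point (fnu P Q A b c nu) xs ys ->
    M *m col_mx xs ys + nu *: col_mx xs ys = col_mx b c.
  move=> nu xs ys hnu hS; have [s1 s2] := saddle_stat hP hQ hnu hS.
  rewrite /M mul_block_col scale_col_mx add_col_mx mulNmx; congr col_mx.
    exact: r1 s1.
  exact: r2 s2.
have hs0 : 0 <= sqnorm z0 by apply: sqnorm_ge0.
exists (Num.sqrt (K * sqnorm z0 + 1)), 1; split.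
  by rewrite sqrtr_gt0; apply: ltr_pwDr => //; apply: mulr_ge0.
split => // nu1 nu2 x1 x2 y1 y2 /andP [p1 _] /andP [p2 _] S1 S2.
have L := lip_core hM hK hB h0 (stat _ _ _ p1 S1) (stat _ _ _ p2 S2) p1 p2.
rewrite /pairnorm -sqrtr_sqr -sqrtrM; last by apply: addr_ge0 => //; apply: mulr_ge0.
apply: ler_wsqrtr.
have -> : sqnorm (x1 - x2) + sqnorm (y1 - y2) = sqnorm (col_mx x1 y1 - col_mx x2 y2).
  by rewrite opp_col_mx add_col_mx /sqnorm dotv_col.
apply: (le_trans L); rewrite mulrDl mul1r lerDl; exact: sqr_ge0.
Qed.
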